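(* For all integers $m,k\ge 1$, the vector $(m,2,k,1)$ is not 0-realizable.
   Context: All graphs are finite, nonempty, and reflexive (every vertex has a loop). $N[v]$ is the closed neighborhood of $v$ (including $v$). For distinct $v,w$, $w$ strictly corners $v$ if $N[v]\subsetneq N[w]$; $v$ is then a strict corner. A vertex dominates a set if adjacent to all its vertices. Corner ranking: set $G^{(1)}=G$, $k=1$. If $G^{(k)}$ is a clique, give all its vertices rank $k$ and stop. Else if $G^{(k)}$ has no strict corners, give all its vertices rank $\infty$ and stop. Else give every strict corner of $G^{(k)}$ rank $k$, delete them to get $G^{(k+1)}$ (induced subgraph), increase $k$ and repeat. The corner rank of $G$ is the largest rank of a vertex; $X_k$ is the set of rank-$k$ vertices. A graph is cop-win iff its corner rank is finite. A graph of finite corner rank $\alpha\ge2$ is of type 1 if some (equivalently every) vertex of rank $\alpha$ dominates $V(G^{(\alpha-1)})$, and of type 0 otherwise. The rank cardinality vector is $(x_\alpha,\dots,x_1)$ with $x_k=|X_k|$. A vector (finite list of positive integers) is 0-realizable if it is the rank cardinality vector of some cop-win graph of type 0. *)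

(* Defs.v *)
From mathcomp Require Import all_boot.
Set Implicit Arguments. Unset Strict Implicit. Unset Printing Implicit Defensive.

(* A (finite, reflexive) graph is given by a vertex type T : finType and an
   adjacency relation e : rel T, assumed reflexive (loops) and symmetric. *)
Section CornerRanking.
Variables (T : finType) (e : rel T).

Definition nbhd (S : {set T}) (v : T) : {set T} := [set u in S | e v u].

Definition is_clique (S : {set T}) : bool :=
  [forall u in S, forall v in S, e u v].

Definition strict_corners (S : {set T}) : {set T} :=
  [set v in S | [exists w in S, (w != v) && (nbhd S v \proper nbhd S w)]].

Definition next_stage (S : {set T}) : {set T} :=
  if is_clique S then set0 else S :\: strict_corners S.

(* G^{(k)} for k >= 1 (G^{(1)} = G) *)
Definition stage (k : nat) : {set T} := iter k.-1 next_stage [set: T].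

Definition rank_set (k : nat) : {set T} :=
  if k == 0 then set0 else
  [set v in stage k | is_clique (stage k) || (v \in strict_corners (stage k))].

Definition copwin : Prop := forall v : T, exists k, v \in rank_set k.

Definition corner_rank (alpha : nat) : Prop :=
  copwin /\ rank_set alpha != set0 /\
  (forall k v, v \in rank_set k -> k <= alpha).

Definition type1 (alpha : nat) : Prop :=
  exists2 v, v \in rank_set alpha & forall u, u \in stage alpha.-1 -> e v u.

(* rank cardinality vector (x_alpha, ..., x_1) *)
Definition rank_card_vector (alpha : nat) : seq nat :=
  [seq #|rank_set i| | i <- rev (iota 1 alpha)].

End CornerRanking.

(* s is 0-realizable: it is the rank cardinality vector of some cop-win graph
   (finite, nonempty, reflexive) of type 0, i.e. of finite corner rank
   alpha >= 2 and not of type 1. *)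
Definition zero_realizable (s : seq nat) : Prop :=
  exists (T : finType) (e : rel T),
    [/\ 0 < #|T|, reflexive e, symmetric e &
    exists alpha, [/\ corner_rank e alpha, 2 <= alpha, ~ type1 e alpha &
                      s = rank_card_vector e alpha]].

(* Main.v *)
Require Import Defs.
From mathcomp Require Import all_boot.
Set Implicit Arguments. Unset Strict Implicit. Unset Printing Implicit Defensive.

Lemma scP (T : finType) (e : rel T) (S : {set T}) v :
  reflect (v \in S /\ exists w, [/\ w \in S, w != v & nbhd e S v \proper nbhd e S w])
          (v \in strict_corners e S).
Proof.
rewrite inE; apply: (iffP andP) => [[vS /exists_inP [w wS /andP [wv pr]]]|[vS [w [wS wv pr]]]].
  by split=> //; exists w.
by split=> //; apply/exists_inP; exists w => //; rewrite wv.
Qed.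

Lemma nbP (T : finType) (e : rel T) (S : {set T}) v x : (x \in nbhd e S v) = (x \in S) && e v x.
Proof. by rewrite inE. Qed.

Record Setup (T : finType) (e : rel T) (S2 S3 S4 : {set T}) (z a b : T) : Prop := {
  er : reflexive e; es : symmetric e;
  hC1 : strict_corners e setT = [set z];
  hS2 : S2 = setT :\: [set z];
  hS3 : S3 = S2 :\: strict_corners e S2;
  hC3 : strict_corners e S3 = [set a; b];
  hS4 : S4 = S3 :\: [set a; b];
  hab : a != b;
  hcl : forall x y, x \in S4 -> y \in S4 -> e x y;
  ht0 : forall v, v \in S4 -> exists2 u, u \in S3 & ~~ e v u }.

Lemma Setup_swap T e S2 S3 S4 z a b : @Setup T e S2 S3 S4 z a b -> Setup e S2 S3 S4 z b a.
Proof.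
case=> *; split=> //; try by rewrite setUC.
by rewrite eq_sym.
Qed.

Section S1.
Variables (T : finType) (e : rel T) (S2 S3 S4 : {set T}) (z a b : T).
Hypothesis H : Setup e S2 S3 S4 z a b.

Lemma inS2 x : (x \in S2) = (x != z).
Proof. by rewrite (hS2 H) !inE andbT. Qed.

Lemma inS3 x : (x \in S3) = (x \in S2) && (x \notin strict_corners e S2).
Proof. by rewrite (hS3 H) inE andbC. Qed.

Lemma inS4 x : (x \in S4) = [&& x \in S3, x != a & x != b].
Proof. by rewrite (hS4 H) !inE negb_or andbC andbA. Qed.

Lemma aS3 : a \in S3.
Proof. by have /scP [] : a \in strict_corners e S3 by rewrite (hC3 H) !inE eqxx. Qed.

Lemma bS3 : b \in S3.
Proof. by have /scP [] : b \in strict_corners e S3 by rewrite (hC3 H) !inE eqxx orbT. Qed.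

Lemma mem3 x : x \in S3 -> [\/ x \in S4, x = a | x = b].
Proof.
move=> x3; rewrite inS4 x3 /=.
by case: (eqVneq x a) => [->|xa]; [constructor 2|case: (eqVneq x b) => [->|xb]; [constructor 3|constructor 1]].
Qed.

Lemma S3S2 x : x \in S3 -> x \in S2.
Proof. by rewrite inS3 => /andP []. Qed.

Lemma S4S3 x : x \in S4 -> x \in S3.
Proof. by rewrite inS4 => /and3P []. Qed.

Lemma L1 c w : c \in S2 -> w \in S2 -> w != c -> nbhd e S2 c \proper nbhd e S2 w ->
  e c z && ~~ e w z.
Proof.
move=> c2 w2 wc pr; apply/negPn/negP => hn.
have : c \in strict_corners e setT.
  apply/scP; split; first by rewrite inE.
  exists w; split => //.
  move/properP: pr => [sub [y y1 y2]].
  apply/properP; split.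
    apply/subsetP => x; rewrite !nbP !inE /= => cx.
    case: (eqVneq x z) => [exz|xz].
      subst x; move: hn; rewrite cx /=; by case: (e w z).
    have : x \in nbhd e S2 c by rewrite nbP inS2 xz.
    by move/(subsetP sub); rewrite nbP => /andP [].
  exists y; first by move: y1; rewrite !nbP inE => /andP [].
  move: y1 y2; rewrite !nbP !inE => /andP [-> _] /=; done.
rewrite (hC1 H) inE => /eqP cz; move: c2; by rewrite inS2 cz eqxx.
Qed.

Lemma C2adj c : c \in strict_corners e S2 -> e c z.
Proof. by move/scP => [c2 [w [w2 wc pr]]]; case/andP: (L1 c2 w2 wc pr). Qed.

Lemma C2S2 c : c \in strict_corners e S2 -> c \in S2.
Proof. by case/scP. Qed.

Lemma dom3 c w : c \in strict_corners e S2 -> w \in S2 -> w != c ->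
  nbhd e S2 c \proper nbhd e S2 w -> w \in S3.
Proof.
move=> cC w2 wc pr; case/andP: (L1 (C2S2 cC) w2 wc pr) => _ nwz.
rewrite inS3 w2 /=; apply/negP => /C2adj; by rewrite (negbTE nwz).
Qed.

Lemma tex : exists2 t, t \in S3 & forall c, c \in strict_corners e S2 -> e t c.
Proof.
have : z \in strict_corners e setT by rewrite (hC1 H) set11.
case/scP => _ [u [_ uz pr]].
have u2 : u \in S2 by rewrite inS2.
have adj c : c \in strict_corners e S2 -> e u c.
  move=> cC; have : c \in nbhd e setT z by rewrite nbP inE (es H) C2adj.
  by move/(subsetP (proper_sub pr)); rewrite nbP => /andP [].
case: (boolP (u \in strict_corners e S2)) => uC; last first.
  by exists u => //; rewrite inS3 u2.
case/scP: (uC) => _ [w [w2 wu pr2]].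
exists w; first exact: dom3 uC w2 wu pr2.
move=> c cC; have : c \in nbhd e S2 u by rewrite nbP C2S2 // adj.
by move/(subsetP (proper_sub pr2)); rewrite nbP => /andP [].
Qed.

Lemma domF w : w \in S4 -> e w a -> e w b -> False.
Proof.
move=> w4 wa wb; case: (ht0 H w4) => u u3; case: (mem3 u3) => [u4|->|->].
- by rewrite (hcl H w4 u4).
- by rewrite wa.
- by rewrite wb.
Qed.

Lemma half_ab : e a b -> nbhd e S3 a \proper nbhd e S3 b.
Proof.
move=> eab.
have : a \in strict_corners e S3 by rewrite (hC3 H) !inE eqxx.
case/scP => _ [w [w3 wa pr]].
have ewa : e w a.
  have : a \in nbhd e S3 a by rewrite nbP aS3 (er H).
  by move/(subsetP (proper_sub pr)); rewrite nbP => /andP [].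
have ewb : e w b.
  have : b \in nbhd e S3 a by rewrite nbP bS3 eab.
  by move/(subsetP (proper_sub pr)); rewrite nbP => /andP [].
case: (mem3 w3) => [w4|wa'|wb'].
- by case: (domF w4 ewa ewb).
- by rewrite wa' eqxx in wa.
- by rewrite -wb'.
Qed.
End S1.

Lemma no_ab T e S2 S3 S4 z a b : @Setup T e S2 S3 S4 z a b -> ~~ e a b.
Proof.
move=> H; apply/negP => eab.
have p1 := half_ab H eab.
have p2 := half_ab (Setup_swap H) (etrans (esym (es H a b)) eab).
by have := proper_trans p1 p2; rewrite (negbTE (proper_irrefl _)).
Qed.

Section S2.
Variables (T : finType) (e : rel T) (S2 S3 S4 : {set T}) (z a b : T).
Hypothesis H : Setup e S2 S3 S4 z a b.

Let nab : ~~ e a b := no_ab H.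
Let nba : ~~ e b a. Proof. by rewrite (es H). Qed.

Lemma adom : exists w, [/\ w \in S3, w != a & nbhd e S3 a \proper nbhd e S3 w].
Proof.
have : a \in strict_corners e S3 by rewrite (hC3 H) !inE eqxx.
by case/scP.
Qed.

Lemma step5 x : x \in S4 -> e x a -> nbhd e S3 a \proper nbhd e S3 x.
Proof.
move=> x4 xa.
have sub : nbhd e S3 a \subset nbhd e S3 x.
  apply/subsetP => y; rewrite !nbP => /andP [y3 ay]; rewrite y3 /=.
  case: (mem3 H y3) => [y4|->|yb] //.
  - exact: (hcl H x4 y4).
  - by move: ay; rewrite yb (negbTE nab).
rewrite properE sub /=; apply/negP => sub2.
case: adom => w [w3 wa pr].
have ewa : e w a.
  have : a \in nbhd e S3 a by rewrite nbP (aS3 H) (er H).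
  by move/(subsetP (proper_sub pr)); rewrite nbP => /andP [].
case/properP: pr => _ [y y1 y2].
move: (y1); rewrite nbP => /andP [y3 wy].
case: (mem3 H y3) => [y4|ya|yb].
- by move: y2; rewrite (subsetP sub2) // nbP y3 (hcl H x4 y4).
- by move: y2; rewrite ya nbP (aS3 H) (er H).
- subst y; case: (mem3 H w3) => [w4|wa'|wb'].
  + exact: (domF H w4 ewa wy).
  + by rewrite wa' eqxx in wa.
  + by move: ewa; rewrite wb' (negbTE nba).
Qed.

Lemma exnb : exists2 x, x \in S4 & e x a.
Proof.
case: adom => w [w3 wa pr].
have ewa : e w a.
  have : a \in nbhd e S3 a by rewrite nbP (aS3 H) (er H).
  by move/(subsetP (proper_sub pr)); rewrite nbP => /andP [].
case: (mem3 H w3) => [w4|wa'|wb'].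
- by exists w.
- by rewrite wa' eqxx in wa.
- by move: ewa; rewrite wb' (negbTE nba).
Qed.

Lemma caseAdj t : t \in S4 -> (forall c, c \in strict_corners e S2 -> e t c) -> e t a -> False.
Proof.
move=> t4 tC ta.
have pr := step5 t4 ta.
have : a \in strict_corners e S2.
  apply/scP; split; first exact: (S3S2 H (aS3 H)).
  exists t; split.
  - exact: (S3S2 H (S4S3 H t4)).
  - by move: t4; rewrite (inS4 H) => /and3P [].
  apply/properP; split.
    apply/subsetP => y; rewrite !nbP => /andP [y2 ay]; rewrite y2 /=.
    case: (boolP (y \in strict_corners e S2)) => yC; first exact: (tC).
    have y3 : y \in S3 by rewrite (inS3 H) y2.
    have : y \in nbhd e S3 a by rewrite nbP y3.
    by move/(subsetP (proper_sub pr)); rewrite nbP => /andP [].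
  case/properP: pr => _ [y y1 y2]; exists y.
    by move: y1; rewrite !nbP => /andP [y3 ->]; rewrite (S3S2 H y3).
  by move: y1 y2; rewrite !nbP => /andP [y3 _]; rewrite y3 (S3S2 H y3).
have := aS3 H; rewrite (inS3 H) => /andP [_ /negP]; done.
Qed.

Lemma caseNon t : t \in S4 -> ~~ e t a -> ~~ e t b -> False.
Proof.
move=> t4 ta tb; case: exnb => x x4 xa.
have : t \in strict_corners e S3.
  apply/scP; split; first exact: (S4S3 H t4).
  exists x; split; first exact: (S4S3 H x4).
    by apply/eqP => ext; subst x; rewrite xa in ta.
  apply/properP; split.
    apply/subsetP => y; rewrite !nbP => /andP [y3 ty]; rewrite y3 /=.
    case: (mem3 H y3) => [y4|ya|yb].
    - exact: (hcl H x4 y4).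
    - by move: ty; rewrite ya (negbTE ta).
    - by move: ty; rewrite yb (negbTE tb).
  exists a; first by rewrite nbP (aS3 H) xa.
  by rewrite nbP (negbTE ta) andbF.
rewrite (hC3 H) !inE => /orP [] /eqP ta'; move: t4; rewrite (inS4 H) ta' eqxx ?andbF //.
Qed.

Lemma caseEq : (forall c, c \in strict_corners e S2 -> e b c) -> False.
Proof.
move=> bC; case: exnb => x x4 xa.
have pr := step5 x4 xa.
case: (boolP [exists c in strict_corners e S2, e a c]) => [/exists_inP [c cC ac]|hn].
  case/scP: (cC) => c2 [w [w2 wc pr2]].
  have w3 := dom3 H cC w2 wc pr2.
  have ewa : e w a.
    have : a \in nbhd e S2 c by rewrite nbP (S3S2 H (aS3 H)) (es H).
    by move/(subsetP (proper_sub pr2)); rewrite nbP => /andP [].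
  have ewb : e w b.
    have : b \in nbhd e S2 c by rewrite nbP (S3S2 H (bS3 H)) (es H) bC.
    by move/(subsetP (proper_sub pr2)); rewrite nbP => /andP [].
  case: (mem3 H w3) => [w4|wa'|wb'].
  - exact: (domF H w4 ewa ewb).
  - by move: ewb; rewrite wa' (negbTE nab).
  - by move: ewa; rewrite wb' (negbTE nba).
have : a \in strict_corners e S2.
  apply/scP; split; first exact: (S3S2 H (aS3 H)).
  exists x; split.
  - exact: (S3S2 H (S4S3 H x4)).
  - by move: x4; rewrite (inS4 H) => /and3P [].
  apply/properP; split.
    apply/subsetP => y; rewrite !nbP => /andP [y2 ay]; rewrite y2 /=.
    case: (boolP (y \in strict_corners e S2)) => yC.
      by move/exists_inP: hn; case; exists y.
    have y3 : y \in S3 by rewrite (inS3 H) y2.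
    have : y \in nbhd e S3 a by rewrite nbP y3.
    by move/(subsetP (proper_sub pr)); rewrite nbP => /andP [].
  case/properP: pr => _ [y y1 y2]; exists y.
    by move: y1; rewrite !nbP => /andP [y3 ->]; rewrite (S3S2 H y3).
  by move: y1 y2; rewrite !nbP => /andP [y3 _]; rewrite y3 (S3S2 H y3).
have := aS3 H; rewrite (inS3 H) => /andP [_ /negP]; done.
Qed.
End S2.

Lemma core T e S2 S3 S4 z a b : @Setup T e S2 S3 S4 z a b -> False.
Proof.
move=> H; have H' := Setup_swap H.
case: (tex H) => t t3 tC.
case: (mem3 H t3) => [t4|ta|tb].
- case: (boolP (e t a)) => ta; first exact: (caseAdj H t4 tC ta).
  case: (boolP (e t b)) => tb; first exact: (caseAdj H' t4 tC tb).
  exact: (caseNon H t4 ta tb).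
- subst t; exact: (caseEq H' tC).
- subst t; exact: (caseEq H tC).
Qed.

Lemma ns0 (T : finType) (e : rel T) : next_stage e set0 = set0.
Proof.
rewrite /next_stage.
have -> : is_clique e set0 by apply/forall_inP => u; rewrite in_set0.
by [].
Qed.

Lemma sc_sub (T : finType) (e : rel T) (S : {set T}) : strict_corners e S \subset S.
Proof. by apply/subsetP => v /scP []. Qed.

Lemma noncorner (T : finType) (e : rel T) (S : {set T}) :
  S != set0 -> exists2 v, v \in S & v \notin strict_corners e S.
Proof.
case/set0Pn => v0 v0S.
case: (arg_maxnP (fun v => #|nbhd e S v|) v0S) => v vS vmax.
exists v => //; apply/negP => /scP [_ [w [wS _ pr]]].
have : #|nbhd e S w| <= #|nbhd e S v| by exact: (vmax w wS).
by rewrite leqNgt (proper_card pr).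
Qed.

Lemma stageS (T : finType) (e : rel T) k : stage e k.+2 = next_stage e (stage e k.+1).
Proof. by []. Qed.

Theorem theorem3p27 (m k : nat) : 1 <= m -> 1 <= k -> ~ zero_realizable [:: m; 2; k; 1].
Proof.
move=> m1 k1 [T [e [_ er es [alpha [[cw [r4 bnd]] a2 nt1 hs]]]]].
have al : size [:: m; 2; k; 1] = size (rank_card_vector e alpha) by rewrite hs.
rewrite /rank_card_vector size_map size_rev size_iota /= in al; subst alpha.
rewrite /rank_card_vector /= in hs; case: hs => _ h3 _ h1.
have S4n : stage e 4 != set0.
  apply: contraNneq r4 => h; apply/eqP/setP => v; by rewrite /rank_set /= inE h in_set0.
have cl0 j : is_clique e (stage e j.+1) -> stage e j.+2 = set0.
  by move=> h; rewrite stageS /next_stage h.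
have e0 j : stage e j.+1 = set0 -> stage e j.+2 = set0.
  by move=> h; rewrite stageS h ns0.
have nc1 : ~~ is_clique e (stage e 1).
  by apply/negP => /(cl0 0) h; move: S4n; rewrite (e0 _ (e0 _ h)) eqxx.
have nc2 : ~~ is_clique e (stage e 2).
  by apply/negP => /(cl0 1) h; move: S4n; rewrite (e0 _ h) eqxx.
have nc3 : ~~ is_clique e (stage e 3).
  by apply/negP => /(cl0 2) h; move: S4n; rewrite h eqxx.
have st j : ~~ is_clique e (stage e j.+1) ->
    stage e j.+2 = stage e j.+1 :\: strict_corners e (stage e j.+1).
  by move=> h; rewrite stageS /next_stage (negbTE h).
have rk j : ~~ is_clique e (stage e j.+1) ->
    rank_set e j.+1 = strict_corners e (stage e j.+1).
  move=> h; apply/setP => v; rewrite /rank_set /= inE (negbTE h) /=.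
  case: (boolP (v \in strict_corners e (stage e j.+1))) => hv.
    by rewrite (subsetP (sc_sub _ _) _ hv).
  by rewrite andbF.
have in4 v : v \in stage e 4 -> [/\ v \notin strict_corners e (stage e 3),
    v \notin strict_corners e (stage e 2) & v \notin strict_corners e (stage e 1)].
  move=> v4.
  have /setDP [v3 n3] : v \in stage e 3 :\: strict_corners e (stage e 3) by rewrite -(st 2 nc3).
  have /setDP [v2 n2] : v \in stage e 2 :\: strict_corners e (stage e 2) by rewrite -(st 1 nc2).
  have /setDP [v1 n1] : v \in stage e 1 :\: strict_corners e (stage e 1) by rewrite -(st 0 nc1).
  by split.
have clique4 : is_clique e (stage e 4).
  apply/negPn/negP => hn.
  case: (noncorner e S4n) => v v4 vn.
  case: (cw v) => j vj; have := bnd j v vj.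
  case: (in4 v v4) => n3 n2 n1.
  case: j vj => [|[|[|[|[|j]]]]] vj _ //.
  - by move: vj; rewrite /rank_set in_set0.
  - by move: vj; rewrite (rk 0 nc1) (negbTE n1).
  - by move: vj; rewrite (rk 1 nc2) (negbTE n2).
  - by move: vj; rewrite (rk 2 nc3) (negbTE n3).
  - by move: vj; rewrite /rank_set /= inE (negbTE hn) (negbTE vn) andbF.
have ht0 v : v \in stage e 4 -> exists2 u, u \in stage e 3 & ~~ e v u.
  move=> v4; case: (boolP [exists u in stage e 3, ~~ e v u]) => [/exists_inP//|hn].
  case: nt1; exists v; first by rewrite /rank_set /= inE v4 clique4.
  move=> u u3; apply/negPn/negP => nu; move/negP: hn; apply; apply/exists_inP; by exists u.
have /cards1P [z hz] : #|rank_set e 1| == 1 by rewrite -h1.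
have /cards2P [a [b [hab hab']]] : #|rank_set e 3| == 2 by rewrite -h3.
have hC1 : strict_corners e (stage e 1) = [set z] by rewrite -(rk 0 nc1).
have hC3 : strict_corners e (stage e 3) = [set a; b] by rewrite -(rk 2 nc3).
apply: (@core T e (stage e 2) (stage e 3) (stage e 4) z a b); split => //.
- by rewrite (st 0 nc1) hC1.
- exact: (st 1 nc2).
- by rewrite (st 2 nc3) hC3.
- move=> x y hx hy; move/forall_inP: clique4 => /(_ x hx) /forall_inP /(_ y hy); done.
Qed.
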